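(* Let $R$ be a commutative ring with $1\neq 0$, $S\subseteq R$ a multiplicatively closed subset, and $M$ a finitely generated faithful multiplication $R$-module. Then $\mathrm{rad}^{S}(M)=\mathrm{rad}^{S}(R)\,M$, where $\mathrm{rad}^{S}(M)$ denotes the intersection of all $S$-prime submodules of $M$ and $\mathrm{rad}^{S}(R)$ the intersection of all $S$-prime ideals of $R$.
   Context: All rings are commutative with $1\neq 0$ and all modules are unital. A multiplicatively closed subset (m.c.s.) $S$ of $R$ is a subset with $0\notin S$, $1\in S$, and $ss'\in S$ for all $s,s'\in S$. $M$ is a multiplication module if every submodule of $M$ equals $JM$ for some ideal $J$; faithful means $\mathrm{Ann}_R(M)=0$. $(L:_R M)=\{r\in R: rM\subseteq L\}$. A submodule $P$ of $M$ with $(P:_R M)\cap S=\emptyset$ is $S$-prime if there exists $s\in S$ such that whenever $am\in P$ ($a\in R$, $m\in M$), then $sa\in(P:_R M)$ or $sm\in P$; $S$-prime ideals are $S$-prime submodules of the $R$-module $R$. An empty intersection of submodules of $M$ is taken to be $M$. *)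

(* Defs.v *)
From HB Require Import structures.
From mathcomp Require Import all_boot all_order all_algebra.
Unset Implicit Arguments. Unset Printing Implicit Defensive.
Import GRing.Theory.
Local Open Scope ring_scope.

Definition submodule (R : comNzRingType) (M : lmodType R) (N : M -> Prop) : Prop :=
  [/\ N 0, (forall x y, N x -> N y -> N (x + y)) & (forall (a : R) x, N x -> N (a *: x))].

Definition ideal (R : comNzRingType) (J : R -> Prop) : Prop := @submodule R R^o J.

Definition ideal_mul (R : comNzRingType) (M : lmodType R) (J : R -> Prop) : M -> Prop :=
  fun x => exists (n : nat) (a : 'I_n -> R) (m : 'I_n -> M),
    (forall i, J (a i)) /\ x = \sum_(i < n) a i *: m i.

Definition set_eq (T : Type) (A B : T -> Prop) : Prop := forall x, A x <-> B x.

Definition multiplication_module (R : comNzRingType) (M : lmodType R) : Prop :=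
  forall N : M -> Prop, submodule R M N ->
    exists J : R -> Prop, ideal R J /\ set_eq M N (ideal_mul R M J).

Definition faithful (R : comNzRingType) (M : lmodType R) : Prop :=
  forall r : R, (forall m : M, r *: m = 0) -> r = 0.

Definition finitely_generated (R : comNzRingType) (M : lmodType R) : Prop :=
  exists (n : nat) (g : 'I_n -> M), forall x : M,
    exists a : 'I_n -> R, x = \sum_(i < n) a i *: g i.

Definition mcs (R : comNzRingType) (S : R -> Prop) : Prop :=
  [/\ ~ S 0, S 1 & forall s t, S s -> S t -> S (s * t)].

Definition colon (R : comNzRingType) (M : lmodType R) (L : M -> Prop) : R -> Prop :=
  fun r => forall m : M, L (r *: m).

Definition S_prime_submodule (R : comNzRingType) (M : lmodType R)
    (S : R -> Prop) (P : M -> Prop) : Prop :=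
  [/\ submodule R M P,
      (forall r, colon R M P r -> ~ S r) &
      exists s, S s /\ forall (a : R) (m : M), P (a *: m) ->
        colon R M P (s * a) \/ P (s *: m)].

Definition S_prime_ideal (R : comNzRingType) (S : R -> Prop) (P : R -> Prop) : Prop :=
  @S_prime_submodule R R^o S P.

(* rad^S(M): intersection of all S-prime submodules (empty intersection = M) *)
Definition radS (R : comNzRingType) (M : lmodType R) (S : R -> Prop) : M -> Prop :=
  fun x => forall P : M -> Prop, S_prime_submodule R M S P -> P x.

Definition radS_ring (R : comNzRingType) (S : R -> Prop) : R -> Prop :=
  fun x => forall P : R -> Prop, S_prime_ideal R S P -> P x.

(* Main.v *)
Require Import Defs.
From mathcomp Require Import all_boot all_order all_algebra.
From Stdlib Require Import Classical ClassicalEpsilon.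
From mathcomp Require Import ring.
Import GRing.Theory.
Local Open Scope ring_scope.

Section Gen.
Variable (R : comNzRingType) (M : lmodType R).

Lemma sub_sum (P : M -> Prop) n (F : 'I_n -> M) :
  submodule R M P -> (forall i, P (F i)) -> P (\sum_(i < n) F i).
Proof. case=> h0 hD _ hF; apply: (big_ind P) => //; move=> i _; exact: hF. Qed.

Lemma ideal_mul_single (J : R -> Prop) r m : J r -> ideal_mul R M J (r *: m).
Proof. by move=> Jr; exists 1%N, (fun _ => r), (fun _ => m); split=> //; rewrite big_ord1. Qed.

Lemma ideal_mul_sub (J : R -> Prop) : ideal R J -> submodule R M (ideal_mul R M J).
Proof.
case=> J0 JD JZ; split.
- by exists 0%N, (fun _ => 0), (fun _ => 0); split=> //; rewrite big_ord0.
- move=> x y [n1 [a1 [m1 [h1 ->]]]] [n2 [a2 [m2 [h2 ->]]]].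
  exists (n1 + n2)%N, (fun i => match split i with inl j => a1 j | inr j => a2 j end),
    (fun i => match split i with inl j => m1 j | inr j => m2 j end); split.
  + by move=> i; case: (split i).
  + rewrite big_split_ord /=; congr (_ + _); apply: eq_bigr => i _.
    * by rewrite (unsplitK (inl i)).
    * by rewrite (unsplitK (inr i)).
- move=> r x [n [a [m [h ->]]]]; exists n, (fun i => r * a i), m; split.
  + by move=> i; exact: (JZ r (a i) (h i)).
  + by rewrite scaler_sumr; apply: eq_bigr => i _; rewrite scalerA.
Qed.

Lemma fchoice (I : Type) (T : Type) (P : I -> T -> Prop) :
  (forall i, exists y, P i y) -> exists f, forall i, P i (f i).
Proof.
move=> h; exists (fun i => proj1_sig (constructive_indefinite_description _ (h i))).
by move=> i; case: (constructive_indefinite_description _ (h i)).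
Qed.

Definition cyc_colon (g : M) (r : R) := forall m : M, exists x : R, r *: m = x *: g.

Lemma cyc_colon_ideal g : ideal R (cyc_colon g).
Proof.
split.
- by move=> m; exists 0; rewrite !scale0r.
- move=> x y hx hy m; case: (hx m) => a ha; case: (hy m) => b hb.
  by exists (a + b); rewrite !scalerDl ha hb.
- move=> a x hx m; case: (hx m) => b hb; exists (a * b).
  by rewrite /= -!scalerA hb.
Qed.

Lemma mult_gen (g : M) : multiplication_module R M ->
  exists n (d : 'I_n -> R) (ms : 'I_n -> M),
    (forall k, cyc_colon g (d k)) /\ g = \sum_(k < n) d k *: ms k.
Proof.
move=> hM.
have sub : submodule R M (fun y => exists x, y = x *: g).
  split.
  - by exists 0; rewrite scale0r.
  - by move=> x y [a ->] [b ->]; exists (a + b); rewrite scalerDl.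
  - by move=> a x [b ->]; exists (a * b); rewrite scalerA.
case: (hM _ sub) => J [_ hJ].
case: (proj1 (hJ g) (ex_intro _ 1 (esym (scale1r g)))) => n [d [ms [hd e]]].
exists n, d, ms; split => // k m.
case: (proj2 (hJ (d k *: m)) (ideal_mul_single _ _ _ (hd k))) => x ->.
by exists x.
Qed.
End Gen.

Section Det.
Variable (R : comNzRingType) (M : lmodType R).
Variable (n : nat) (g : 'I_n -> M).
Hypothesis hg : forall x : M, exists a : 'I_n -> R, x = \sum_(i < n) a i *: g i.
Hypothesis hF : faithful R M.
Hypothesis hM : multiplication_module R M.

Definition theta (x : R) := exists c : 'I_n -> R,
  (forall j, cyc_colon R M (g j) (c j)) /\ x = \sum_(j < n) c j.

Lemma theta0 : theta 0.
Proof.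
exists (fun _ => 0); split; last by rewrite big1.
by move=> j; case: (cyc_colon_ideal R M (g j)).
Qed.

Lemma thetaD x y : theta x -> theta y -> theta (x + y).
Proof.
move=> [c [hc ->]] [d [hd ->]]; exists (fun j => c j + d j); split.
  by move=> j; case: (cyc_colon_ideal R M (g j)) => _ D _; apply: D.
by rewrite big_split.
Qed.

Lemma thetaM r x : theta x -> theta (r * x).
Proof.
move=> [c [hc ->]]; exists (fun j => r * c j); split.
  by move=> j; case: (cyc_colon_ideal R M (g j)) => _ _ Z; apply: (Z r).
by rewrite mulr_sumr.
Qed.

Lemma thetaB x y : theta x -> theta y -> theta (x - y).
Proof. move=> hx hy; apply: thetaD => //; rewrite -mulN1r; exact: thetaM. Qed.

Lemma theta_gen i a : cyc_colon R M (g i) a -> theta a.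
Proof.
move=> ha; exists (fun j => if j == i then a else 0); split.
  move=> j; case: eqP => [->|_] //; by case: (cyc_colon_ideal R M (g j)).
by rewrite (bigD1 i) //= eqxx big1 ?addr0 // => j /negbTE ->.
Qed.

Lemma cyc_sum i m (F : 'I_m -> R) :
  (forall k, cyc_colon R M (g i) (F k)) -> cyc_colon R M (g i) (\sum_(k < m) F k).
Proof.
move=> h; case: (cyc_colon_ideal R M (g i)) => Z D _.
by apply: (big_ind (cyc_colon R M (g i))) => // k _; apply: h.
Qed.

Lemma row_rel i : exists t : 'I_n -> R,
  (forall j, cyc_colon R M (g i) (t j)) /\ g i = \sum_(j < n) t j *: g j.
Proof.
case: (mult_gen R M (g i) hM) => m [d [ms [hd e]]].
case: (fchoice _ _ (fun k a => ms k = \sum_(j < n) a j *: g j) (fun k => hg (ms k))) => x hx.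
exists (fun j => \sum_(k < m) d k * x k j); split.
  move=> j; apply: cyc_sum => k; rewrite mulrC.
  by case: (cyc_colon_ideal R M (g i)) => _ _ Z; apply: (Z (x k j)).
rewrite e; under eq_bigr => k _ do rewrite hx scaler_sumr.
rewrite exchange_big /=; apply: eq_bigr => j _; rewrite scaler_suml.
by apply: eq_bigr => k _; rewrite scalerA.
Qed.

Lemma one_theta : theta 1.
Proof.
case: (fchoice _ _ _ row_rel) => T hT.
pose A := \matrix_(i < n, j < n) ((i == j)%:R - T i j).
have hA : forall i, \sum_(j < n) A i j *: g j = 0.
  move=> i; under eq_bigr => j _ do rewrite mxE scalerBl.
  rewrite sumrB -(proj2 (hT i)) (bigD1 i) //= eqxx scale1r big1 ?addr0 ?subrr //.
  by move=> j /negbTE; rewrite eq_sym => ->; rewrite scale0r.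
have hd : forall k, \det A *: g k = 0.
  move=> k.
  have e : \sum_(j < n) (\adj A *m A) k j *: g j = \det A *: g k.
    rewrite mul_adj_mx (bigD1 k) //= mxE eqxx mulr1n big1 ?addr0 //.
    by move=> j /negbTE; rewrite mxE eq_sym => ->; rewrite mulr0n scale0r.
  rewrite -e; under eq_bigr => j _ do rewrite mxE scaler_suml.
  rewrite exchange_big /= big1 // => i _.
  under eq_bigr => j _ do rewrite -scalerA.
  by rewrite -scaler_sumr hA scaler0.
have d0 : \det A = 0.
  apply: hF => m; case: (hg m) => a ->.
  by rewrite scaler_sumr big1 // => i _; rewrite scalerA mulrC -scalerA hd scaler0.
have cong : theta (\det A - \det (1%:M : 'M[R]_n)).
  rewrite /determinant.
  apply: (big_ind2 (fun x y => theta (x - y))).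
  - by rewrite subrr; exact: theta0.
  - move=> x1 x2 y1 y2 h1 h2.
    have -> : x1 + y1 - (x2 + y2) = (x1 - x2) + (y1 - y2) by ring.
    by apply: thetaD.
  - move=> s _; rewrite -mulrBr; apply: thetaM.
    apply: (big_ind2 (fun x y => theta (x - y))).
    + by rewrite subrr; exact: theta0.
    + move=> x1 x2 y1 y2 h1 h2.
      have -> : x1 * y1 - x2 * y2 = x1 * (y1 - y2) + y2 * (x1 - x2).
        by ring.
      by apply: thetaD; apply: thetaM.
    + move=> i _; rewrite !mxE.
      have -> : forall u v : R, u - v - u = -1 * v by move=> u v; ring.
      by apply: thetaM; apply: (theta_gen i); apply: (proj1 (hT i)).
move: cong; rewrite d0 det1 sub0r => h.
by rewrite -(opprK 1) -mulN1r; apply: thetaM.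
Qed.
End Det.

Section Canc.
Variable (R : comNzRingType).

Lemma ideal_sum (J : R -> Prop) m (F : 'I_m -> R) :
  ideal R J -> (forall k, J (F k)) -> J (\sum_(k < m) F k).
Proof. move=> [J0 JD _] h; apply: (big_ind J) => // k _; exact: h. Qed.

Lemma idealM (J : R -> Prop) r x : ideal R J -> J x -> J (r * x).
Proof. by move=> [_ _ JZ] h; apply: (JZ r x h). Qed.

Lemma binom_K (K : R -> Prop) x y p q :
  K 0 -> (forall u v, K u -> K v -> K (u + v)) -> (forall r u, K u -> K (r * u)) ->
  K (x ^+ p) -> K (y ^+ q) -> K ((x + y) ^+ (p + q)).
Proof.
move=> K0 KD KM hx hy; rewrite exprDn.
apply: (big_ind K) => // i _; rewrite -mulr_natl; apply: (KM _ _).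
case: (leqP q i) => hi.
  by rewrite -(subnK hi) exprD mulrA; apply: (KM _ _).
have hp : (p <= p + q - i)%N by rewrite -addnBA ?leq_addr // ltnW.
rewrite -(subnK hp) exprD.
have -> : x ^+ (p + q - i - p) * x ^+ p * y ^+ i = (x ^+ (p + q - i - p) * y ^+ i) * x ^+ p by ring.
by apply: (KM _ _).
Qed.
End Canc.

Section Canc2.
Variable (R : comNzRingType) (M : lmodType R).
Variable (n : nat) (g : 'I_n -> M).
Hypothesis hg : forall x : M, exists a : 'I_n -> R, x = \sum_(i < n) a i *: g i.
Hypothesis hF : faithful R M.
Hypothesis hM : multiplication_module R M.

Lemma cancellation (J : R -> Prop) a : ideal R J ->
  (forall m, ideal_mul R M J (a *: m)) -> J a.
Proof.
move=> hJ ha.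
case: (one_theta R M n g hg hF hM) => c [hc e1].
pose K := fun r => J (r * a).
have K0 : K 0 by rewrite /K mul0r; case: hJ.
have KD : forall u v, K u -> K v -> K (u + v).
  by move=> u v; rewrite /K mulrDl; case: hJ => _ D _; apply: D.
have KM : forall r u, K u -> K (r * u).
  by move=> r u hu; rewrite /K -mulrA; apply: idealM.
have Kc : forall j, K (c j ^+ 2).
  move=> j; case: (ha (g j)) => nn [b [ms [hb eq]]].
  case: (fchoice _ _ (fun k x => c j *: ms k = x *: g j) (fun k => hc j (ms k))) => r hr.
  pose bb := \sum_(k < nn) b k * r k.
  have Jbb : J bb by apply: ideal_sum => // k; rewrite mulrC; apply: idealM.
  have E : (c j * a) *: g j = bb *: g j.
    rewrite -scalerA eq scaler_sumr scaler_suml; apply: eq_bigr => k _.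
    by rewrite scalerA (mulrC (c j)) -!scalerA hr.
  have Z : c j * (c j * a - bb) = 0.
    apply: hF => m; case: (hc j m) => x hx.
    by rewrite mulrC -scalerA hx scalerA mulrC -scalerA scalerBl E subrr scaler0.
  rewrite /K; have -> : c j ^+ 2 * a = c j * bb.
    by apply/eqP; rewrite -subr_eq0 -Z; apply/eqP; ring.
  exact: idealM.
have : exists e, K ((\sum_(j < n) c j) ^+ e).
  apply: (big_ind (fun x => exists e, K (x ^+ e))).
  - by exists 1%N; rewrite expr1.
  - move=> x y [p hp] [q hq]; exists (p + q)%N; exact: binom_K.
  - by move=> j _; exists 2%N.
by rewrite -e1 => -[e]; rewrite /K expr1n mul1r.
Qed.
End Canc2.

Section Main.
Variable (R : comNzRingType) (M : lmodType R) (S : R -> Prop).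

Lemma colon_Sprime (P : M -> Prop) :
  S_prime_submodule R M S P -> S_prime_ideal R S (colon R M P).
Proof.
case=> [[P0 PD PZ] PS [s [Ss hs]]]; split.
- split.
  + by move=> m; rewrite scale0r.
  + by move=> x y hx hy m; rewrite scalerDl; apply: PD.
  + move=> a x hx m; rewrite /= -scalerA; exact: PZ.
- move=> r hr; apply: PS => m; have e : (r *: (1 : R^o)) = r by exact: mulr1.
  by have := hr 1 m; rewrite e.
- exists s; split => // a b hab.
  case: (classic (colon R M P (s * a))) => h.
    left => r m; have e : ((s * a) *: (r : R^o)) = r * (s * a) by exact: mulrC.
    by rewrite e -scalerA; apply: PZ; exact: h.
  right => m; case: (hs a (b *: m)).
  + by rewrite scalerA; exact: (hab m).
  + by move=> h'; exfalso; exact: h h'.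
  + by rewrite scalerA.
Qed.
End Main.

Section Main2.
Variable (R : comNzRingType) (M : lmodType R) (S : R -> Prop).
Variable (n : nat) (g : 'I_n -> M).
Hypothesis hg : forall x : M, exists a : 'I_n -> R, x = \sum_(i < n) a i *: g i.
Hypothesis hF : faithful R M.
Hypothesis hM : multiplication_module R M.

Lemma pM_Sprime (p : R -> Prop) :
  S_prime_ideal R S p -> S_prime_submodule R M S (ideal_mul R M p).
Proof.
move=> hp; have hpi : ideal R p by case: hp.
case: hp => _ pS [s [Ss hs]].
have canc := cancellation R M n g hg hF hM p.
split.
- exact: ideal_mul_sub.
- move=> r hr; apply: pS => m.
  have e : (r *: (m : R^o)) = m * r by exact: mulrC.
  by rewrite e; apply: idealM => //; apply: canc.
- exists s; split => // a m ham.
  case: (classic (colon R M (ideal_mul R M p) (s * a))) => h; first by left.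
  right; case: (mult_gen R M m hM) => k [d [ms [hd ->]]].
  exists k, (fun i => s * d i), ms; split; last first.
    by rewrite scaler_sumr; apply: eq_bigr => i _; rewrite scalerA.
  move=> i.
  have pad : p (a * d i).
    apply: canc => // m'; case: (hd i m') => x hx.
    rewrite -scalerA hx scalerA mulrC -scalerA.
    by case: (ideal_mul_sub R M p hpi) => _ _ Z; apply: Z.
  case: (hs a (d i) pad) => [hc|]; last by [].
  exfalso; apply: h => m'; apply: ideal_mul_single.
  have := hc 1; have e : ((s * a) *: (1 : R^o)) = s * a by exact: mulr1.
  by rewrite e.
Qed.
End Main2.

Theorem theorem3p6 (R : comNzRingType) (S : R -> Prop) (M : lmodType R) :
  mcs R S -> finitely_generated R M -> faithful R M -> multiplication_module R M ->
  set_eq M (radS R M S) (ideal_mul R M (radS_ring R S)).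
Proof.
move=> _ [n [g hg]] hF hM x; split.
- move=> hx.
  have subN : submodule R M (radS R M S).
    split.
    + by move=> P [[P0 _ _] _ _].
    + by move=> u v hu hv P hP; case: (hP) => [[_ D _] _ _]; apply: D; [apply: hu|apply: hv].
    + by move=> r u hu P hP; case: (hP) => [[_ _ Z] _ _]; apply: Z; apply: hu.
  case: (hM _ subN) => J [_ hJ].
  case: (proj1 (hJ x) hx) => nn [a [ms [ha ->]]].
  exists nn, a, ms; split => // i p hp.
  have hpi : ideal R p by case: hp.
  apply: (cancellation R M n g hg hF hM p) => // m.
  have hN : radS R M S (a i *: m) by apply: (proj2 (hJ _)); apply: ideal_mul_single.
  exact: (hN _ (pM_Sprime R M S n g hg hF hM p hp)).
- move=> [nn [a [ms [ha ->]]]] P hP.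
  have sP : submodule R M P by case: hP.
  apply: sub_sum => // i.
  exact: (ha i _ (colon_Sprime R M S P hP)).
Qed.
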